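(* Under the hypotheses and notation of the preceding statement (so $a<b$ coprime positive integers, $\alpha=\sqrt{b/a}\notin\mathbb{Q}$, $\Gamma$ a full-rank lattice in $\mathbb{Z}^2$ with basis $\mathbf e_1=(\lambda_1,\mu_1),\mathbf e_2=(\lambda_2,\mu_2)$ satisfying $\|\mathbf e_1\|\le2\nu_2$, $\|\mathbf e_2\|\le2\nu_1$, and $\theta=-\frac{\lambda_1-\alpha\mu_1}{\lambda_2-\alpha\mu_2}$), for every $N>1$, $$ND_\alpha(N)=O\Big(\frac{b}{\log b}\log N\Big),\qquad ND_\theta(N)=O\Big(\frac{b\det\Gamma}{\log(b\det\Gamma)}\log N\Big),$$ with absolute implied constants.
   Context: $\|(x,y)\|=\max(|x|,|y|)$; $\nu_1\le\nu_2$ are the successive minima of $\Gamma$ for this norm. For real $\vartheta$, $D_\vartheta(N)=\sup_{\lambda\in[0,1]}\big|\frac{\#\{1\le n\le N:\{n\vartheta\}\in[0,\lambda]\}}{N}-\lambda\big|$, $\{x\}$ denoting the fractional part. *)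

(* Defs.v *)
From Stdlib Require Import Reals Lra Lia ZArith.
From Stdlib Require Import ClassicalEpsilon.
Open Scope R_scope.

(** Fractional part {x} = x - floor x  (Stdlib: frac_part x = x - IZR (Int_part x),
    Int_part x = up x - 1 = floor x). *)
Definition frac (x : R) : R := frac_part x.

Fixpoint count_in (theta lam : R) (N : nat) : nat :=
  match N with
  | O => O
  | S k => (count_in theta lam k +
            (if Rle_dec 0 (frac (INR (S k) * theta)) then
               if Rle_dec (frac (INR (S k) * theta)) lam then 1 else 0
             else 0))%nat
  end.

Lemma count_in_le theta lam N : (count_in theta lam N <= N)%nat.
Proof.
  induction N as [|k IH]; simpl; [lia|].
  destruct (Rle_dec _ _); [destruct (Rle_dec _ _)|]; lia.
Qed.

Definition disc_set (theta : R) (N : nat) : R -> Prop :=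
  fun d => exists lam, 0 <= lam <= 1 /\
    d = Rabs (INR (count_in theta lam N) / INR N - lam).

Lemma disc_set_bound theta N : bound (disc_set theta N).
Proof.
  exists (INR N * Rabs (/ INR N) + 1).
  intros d [lam [Hl ->]].
  unfold Rdiv.
  eapply Rle_trans; [apply Rabs_triang|].
  rewrite Rabs_Ropp, Rabs_mult, (Rabs_right (INR _)) by (apply Rle_ge, pos_INR).
  assert (H := le_INR _ _ (count_in_le theta lam N)).
  assert (0 <= Rabs (/ INR N)) by apply Rabs_pos.
  rewrite (Rabs_right lam) by lra.
  apply Rplus_le_compat; [|lra].
  apply Rmult_le_compat_r; lra.
Qed.

Lemma disc_set_nonempty theta N : exists d, disc_set theta N d.
Proof.
  exists (Rabs (INR (count_in theta 0 N) / INR N - 0)).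
  exists 0. split; [split; apply Rle_refl || lra | reflexivity].
Qed.

Definition discrepancy (theta : R) (N : nat) : R :=
  proj1_sig (completeness (disc_set theta N) (disc_set_bound theta N)
                          (disc_set_nonempty theta N)).

Definition supnorm (v : Z * Z) : Z := Z.max (Z.abs (fst v)) (Z.abs (snd v)).

Definition in_lattice (e1 e2 v : Z * Z) : Prop :=
  exists m n : Z, fst v = (m * fst e1 + n * fst e2)%Z /\
                  snd v = (m * snd e1 + n * snd e2)%Z.

Definition zdet (v w : Z * Z) : Z := (fst v * snd w - snd v * fst w)%Z.

Definition lattice_det (e1 e2 : Z * Z) : Z := Z.abs (zdet e1 e2).

Definition is_nu1 (e1 e2 : Z * Z) (nu : Z) : Prop :=
  (exists v, in_lattice e1 e2 v /\ v <> (0%Z, 0%Z) /\ supnorm v = nu) /\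
  (forall v, in_lattice e1 e2 v -> v <> (0%Z, 0%Z) -> (nu <= supnorm v)%Z).

Definition is_nu2 (e1 e2 : Z * Z) (nu : Z) : Prop :=
  (exists v w, in_lattice e1 e2 v /\ in_lattice e1 e2 w /\ zdet v w <> 0%Z /\
               Z.max (supnorm v) (supnorm w) = nu) /\
  (forall v w, in_lattice e1 e2 v -> in_lattice e1 e2 w -> zdet v w <> 0%Z ->
               (nu <= Z.max (supnorm v) (supnorm w))%Z).

(* Main.v *)
Require Import Defs.
From Stdlib Require Import Reals Lra Lia ZArith List Classical.
Open Scope R_scope.

Definition inb (x y t : R) : bool :=
  if Rle_dec x t then if Rle_dec t y then true else false else false.
Definition Pf (th x y : R) (n : nat) : bool := inb x y (frac (INR n * th)).

Fixpoint cnt (f : nat -> bool) (s len : nat) : nat :=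
  match len with O => O | S k => (cnt f s k + if f (s + S k)%nat then 1 else 0)%nat end.

Lemma frac_bounds x : 0 <= frac x < 1.
Proof. unfold frac; destruct (base_fp x); lra. Qed.

Lemma frac_eq x : frac x = x - IZR (Int_part x).
Proof. reflexivity. Qed.

Lemma count_in_cnt th l N : count_in th l N = cnt (Pf th 0 l) 0 N.
Proof.
  induction N as [|k IH]; [reflexivity|].
  cbn [count_in cnt]. rewrite IH. replace (0 + S k)%nat with (S k) by lia. unfold Pf, inb.
  repeat match goal with |- context[Rle_dec ?a ?b] => destruct (Rle_dec a b) end;
  reflexivity.
Qed.

Lemma cnt_add f s a b : cnt f s (a + b) = (cnt f s a + cnt f (s + a) b)%nat.
Proof.
  induction b as [|b IH]; [cbn [cnt]; rewrite Nat.add_0_r; lia|].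
  rewrite Nat.add_succ_r. cbn [cnt]. rewrite IH.
  replace (s + S (a + b))%nat with (s + a + S b)%nat by lia. lia.
Qed.

Lemma cnt_le f s n : (cnt f s n <= n)%nat.
Proof. induction n; simpl; [lia|]. destruct (f _); lia. Qed.

Lemma cnt_compl th l s n : (n <= cnt (Pf th 0 l) s n + cnt (Pf th l 1) s n)%nat.
Proof.
  induction n as [|n IH]; [simpl; lia|]. cbn [cnt].
  unfold Pf at 2 4, inb.
  destruct (frac_bounds (INR (s + S n) * th)).
  repeat match goal with |- context[Rle_dec ?a ?b] => destruct (Rle_dec a b) end;
  try lia; lra.
Qed.

Lemma cnt_filter f s n : cnt f s n = length (filter f (seq (S s) n)).
Proof.
  induction n as [|n IH]; [reflexivity|]. cbn [cnt].
  rewrite seq_S, filter_app, length_app, IH. simpl.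
  replace (S (s + n)) with (s + S n)%nat by lia.
  destruct (f _); simpl; lia.
Qed.

Lemma int_count (l : list Z) A B : A <= B -> NoDup l ->
  (forall z, In z l -> A < IZR z < B) -> INR (length l) <= B - A + 1.
Proof.
  intros HAB Hnd Hin.
  destruct (archimed A) as [HA1 HA2]. destruct (archimed B) as [HB1 HB2].
  assert (Hm : (up A <= up B)%Z).
  { assert (IZR (up A) - 1 < IZR (up B)) by lra.
    assert (up A - 1 < up B)%Z. { apply lt_IZR. rewrite minus_IZR. simpl. lra. } lia. }
  set (m := Z.to_nat (up B - up A)).
  assert (Hinc : incl l (map (fun i => (up A + Z.of_nat i)%Z) (seq 0 m))).
  { intros z Hz. destruct (Hin z Hz) as [H1 H2].
    assert (z1 : (up A <= z)%Z).
    { assert (IZR (up A) - 1 < IZR z) by lra.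
      assert (up A - 1 < z)%Z. { apply lt_IZR. rewrite minus_IZR. simpl. lra. } lia. }
    assert (z2 : (z < up B)%Z). { apply lt_IZR. lra. }
    apply in_map_iff. exists (Z.to_nat (z - up A)). split; [lia|].
    apply in_seq. unfold m. lia. }
  pose proof (NoDup_incl_length Hnd Hinc) as Hl.
  rewrite length_map, length_seq in Hl.
  apply le_INR in Hl.
  unfold m in Hl. rewrite (INR_IZR_INZ (Z.to_nat _)) in Hl. rewrite Z2Nat.id in Hl by lia.
  rewrite minus_IZR in Hl. lra.
Qed.

Lemma Rabs_le_inv' x e : Rabs x <= e -> -e <= x <= e.
Proof. intros H. unfold Rabs in H. destruct (Rcase_abs x); lra. Qed.

Lemma block_upper th q p n0 x y eps :
  (1 <= q)%nat -> x <= y ->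
  Rabs (INR q * th - IZR p) < eps -> eps <= / INR q ->
  (forall (j : nat) (k : Z), (1 <= j < q)%nat -> eps <= Rabs (INR j * th - IZR k)) ->
  INR (cnt (Pf th x y) n0 q) <= INR q * (y - x) + 3.
Proof.
  intros Hq Hxy Hp Heps Hmin.
  assert (Hq0 : 0 < INR q) by (apply lt_0_INR; lia).
  set (I0 := Int_part (INR n0 * th)).
  set (F0 := frac (INR n0 * th)).
  set (phi := fun n : nat => (Z.of_nat (n - n0) * p - Z.of_nat q * (Int_part (INR n * th) - I0))%Z).
  set (l := filter (Pf th x y) (seq (S n0) q)).
  rewrite cnt_filter. fold l.
  rewrite <- (length_map phi l).
  assert (Hid : forall n, (n0 < n <= n0 + q)%nat ->
     IZR (phi n) = INR q * frac (INR n * th) - INR q * F0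
                   - INR (n - n0) * (INR q * th - IZR p)).
  { intros n Hn. unfold phi, F0, frac, frac_part, I0.
    rewrite minus_IZR, !mult_IZR, minus_IZR, <- !INR_IZR_INZ.
    replace (INR n) with (INR n0 + INR (n - n0)) at 2
      by (rewrite <- plus_INR; f_equal; lia).
    ring. }
  assert (Hsmall : forall n, (n0 < n <= n0 + q)%nat ->
     Rabs (INR (n - n0) * (INR q * th - IZR p)) < 1).
  { intros n Hn. rewrite Rabs_mult, Rabs_right by (apply Rle_ge, pos_INR).
    assert (INR (n - n0) <= INR q) by (apply le_INR; lia).
    assert (0 < INR (n - n0)) by (apply lt_0_INR; lia).
    assert (eps * INR q <= 1).
    { apply Rmult_le_compat_r with (r := INR q) in Heps; [|lra].
      rewrite Rinv_l in Heps; lra. }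
    pose proof (Rabs_pos (INR q * th - IZR p)).
    nra. }
  apply Rle_trans with ((INR q * (y - F0) + 1) - (INR q * (x - F0) - 1) + 1); [|lra].
  apply int_count.
  - nra.
  - apply NoDup_map_NoDup_ForallPairs; [|apply NoDup_filter, seq_NoDup].
    assert (Hinj : forall n1 n2, (n0 < n1 < n2)%nat -> (n2 <= n0 + q)%nat -> phi n1 = phi n2 -> False).
    { intros n1 n2 H12 H2 He. unfold phi in He.
      set (j := (n2 - n1)%nat).
      set (k := (Int_part (INR n2 * th) - Int_part (INR n1 * th))%Z).
      assert (Hjk : (Z.of_nat j * p = Z.of_nat q * k)%Z).
      { unfold j, k. rewrite Nat2Z.inj_sub by lia.
        rewrite Nat2Z.inj_sub in He by lia. rewrite Nat2Z.inj_sub in He by lia. lia. }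
      assert (Hj : (1 <= j < q)%nat) by (unfold j; lia).
      specialize (Hmin j k Hj).
      apply (f_equal IZR) in Hjk. rewrite !mult_IZR, <- !INR_IZR_INZ in Hjk.
      assert (Heq : INR j * th - IZR k = INR j / INR q * (INR q * th - IZR p)).
      { field_simplify; [|lra]. apply (Rmult_eq_reg_r (INR q)); [|lra].
        field_simplify; [|lra]. nra. }
      rewrite Heq, Rabs_mult, Rabs_right in Hmin.
      2:{ apply Rle_ge, Rmult_le_pos; [apply pos_INR|]. left; apply Rinv_0_lt_compat; lra. }
      assert (INR j < INR q) by (apply lt_INR; lia).
      assert (0 < INR j) by (apply lt_0_INR; lia).
      assert (INR j / INR q < 1).
      { apply (Rmult_lt_reg_r (INR q)); [lra|]. unfold Rdiv. rewrite Rmult_assoc, Rinv_l; lra. }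
      assert (0 < INR j / INR q) by (apply Rdiv_lt_0_compat; lra).
      pose proof (Rabs_pos (INR q * th - IZR p)). nra. }
    intros n1 n2 H1 H2 He.
    unfold l in H1, H2. apply filter_In in H1, H2.
    destruct H1 as [H1 _]. destruct H2 as [H2 _]. apply in_seq in H1, H2.
    destruct (lt_eq_lt_dec n1 n2) as [[Hlt|Heq]|Hgt]; auto.
    + exfalso; apply (Hinj n1 n2); lia.
    + exfalso; apply (Hinj n2 n1); [lia|lia|auto].
  - intros z Hz. apply in_map_iff in Hz. destruct Hz as [n [<- Hn]].
    unfold l in Hn. apply filter_In in Hn. destruct Hn as [Hn Hf].
    apply in_seq in Hn.
    assert (Hn' : (n0 < n <= n0 + q)%nat) by lia.
    rewrite (Hid n Hn').
    specialize (Hsmall n Hn'). apply Rabs_def2 in Hsmall.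
    unfold Pf, inb in Hf.
    destruct (Rle_dec x _); [|discriminate]. destruct (Rle_dec _ y); [|discriminate].
    split; nra.
Qed.

Lemma block_bound th q p n0 lam eps :
  (1 <= q)%nat -> 0 <= lam <= 1 ->
  Rabs (INR q * th - IZR p) < eps -> eps <= / INR q ->
  (forall (j : nat) (k : Z), (1 <= j < q)%nat -> eps <= Rabs (INR j * th - IZR k)) ->
  Rabs (INR (cnt (Pf th 0 lam) n0 q) - INR q * lam) <= 3.
Proof.
  intros Hq Hl Hp He Hm.
  pose proof (block_upper th q p n0 0 lam eps Hq ltac:(lra) Hp He Hm).
  pose proof (block_upper th q p n0 lam 1 eps Hq ltac:(lra) Hp He Hm).
  pose proof (le_INR _ _ (cnt_compl th lam n0 q)). rewrite plus_INR in H1.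
  apply Rabs_le; lra.
Qed.

Lemma multi_block th q p lam eps :
  (1 <= q)%nat -> 0 <= lam <= 1 ->
  Rabs (INR q * th - IZR p) < eps -> eps <= / INR q ->
  (forall (j : nat) (k : Z), (1 <= j < q)%nat -> eps <= Rabs (INR j * th - IZR k)) ->
  forall m n0, Rabs (INR (cnt (Pf th 0 lam) n0 (m * q)) - INR (m * q) * lam) <= 3 * INR m.
Proof.
  intros Hq Hl Hp He Hm m. induction m as [|m IH]; intros n0.
  - simpl. rewrite Rmult_0_l, Rminus_0_r, Rabs_R0. lra.
  - replace (S m * q)%nat with (q + m * q)%nat by lia.
    rewrite cnt_add, !plus_INR, S_INR.
    pose proof (block_bound th q p n0 lam eps Hq Hl Hp He Hm).
    specialize (IH (n0 + q)%nat).
    apply Rabs_le. apply Rabs_le_inv' in H. apply Rabs_le_inv' in IH. lra.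
Qed.

Lemma pigeon n (f : nat -> nat) : (forall i, (i <= n)%nat -> (f i < n)%nat) ->
  exists i j, (i < j <= n)%nat /\ f i = f j.
Proof.
  intros Hf. apply NNPP. intros Hno.
  assert (Hnd : NoDup (map f (seq 0 (S n)))).
  { apply NoDup_map_NoDup_ForallPairs; [|apply seq_NoDup].
    intros x y Hx Hy He. apply in_seq in Hx, Hy.
    destruct (lt_eq_lt_dec x y) as [[H|H]|H]; auto; exfalso; apply Hno.
    - exists x, y; split; [lia|auto].
    - exists y, x; split; [lia|auto]. }
  assert (Hinc : incl (map f (seq 0 (S n))) (seq 0 n)).
  { intros z Hz. apply in_map_iff in Hz. destruct Hz as [i [<- Hi]].
    apply in_seq in Hi. apply in_seq. specialize (Hf i ltac:(lia)). lia. }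
  pose proof (NoDup_incl_length Hnd Hinc). rewrite length_map, !length_seq in H. lia.
Qed.

Lemma dirichlet th N : (1 <= N)%nat ->
  exists q p, (1 <= q <= N)%nat /\ Rabs (INR q * th - IZR p) < / INR N.
Proof.
  intros HN.
  assert (HN0 : 0 < INR N) by (apply lt_0_INR; lia).
  set (g := fun j : nat => Int_part (INR N * frac (INR j * th))).
  assert (Hg : forall j, (0 <= g j < Z.of_nat N)%Z).
  { intros j. unfold g. destruct (frac_bounds (INR j * th)) as [F1 F2].
    destruct (base_Int_part (INR N * frac (INR j * th))) as [B1 B2].
    split.
    - assert (0 <= INR N) by apply pos_INR.
      assert (IZR (Int_part (INR N * frac (INR j * th))) > -1) by nra.
      assert (-1 < Int_part (INR N * frac (INR j * th)))%Z.
      { apply lt_IZR. change (IZR (-1)) with (-(1)). lra. }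
      lia.
    - apply lt_IZR. rewrite <- INR_IZR_INZ. nra. }
  destruct (pigeon N (fun j => Z.to_nat (g j))) as [i [j [Hij He]]].
  { intros i Hi. specialize (Hg i). lia. }
  assert (Hge : g i = g j) by (pose proof (Hg i); pose proof (Hg j); lia).
  exists (j - i)%nat, (Int_part (INR j * th) - Int_part (INR i * th))%Z.
  split; [lia|].
  unfold g in Hge.
  destruct (base_Int_part (INR N * frac (INR i * th))) as [B1 B2].
  destruct (base_Int_part (INR N * frac (INR j * th))) as [B3 B4].
  rewrite Hge in B1, B2.
  assert (Habs : Rabs (INR N * (frac (INR j * th) - frac (INR i * th))) < 1).
  { apply Rabs_def1; lra. }
  rewrite Rabs_mult, Rabs_right in Habs by lra.
  replace (INR (j - i) * th - IZR (Int_part (INR j * th) - Int_part (INR i * th)))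
    with (frac (INR j * th) - frac (INR i * th)).
  2:{ unfold frac, frac_part. rewrite minus_INR by lia. rewrite minus_IZR. ring. }
  apply (Rmult_lt_reg_l (INR N)); [lra|]. rewrite Rinv_r; lra.
Qed.

Lemma min_ex (P : nat -> Prop) n : P n -> exists m, P m /\ forall k, (k < m)%nat -> ~ P k.
Proof.
  revert P. induction n as [n IH] using lt_wf_ind. intros P Hn.
  destruct (classic (exists k, (k < n)%nat /\ P k)) as [[k [Hk Pk]]|Hno].
  - exact (IH k Hk P Pk).
  - exists n. split; auto. intros k Hk Pk. apply Hno. eauto.
Qed.

Lemma ln_le' x y : 0 < x -> x <= y -> ln x <= ln y.
Proof. intros Hx [H|H]; [left; apply ln_increasing; lra|subst; lra]. Qed.

Lemma ln_le_sub1 t : 0 < t -> ln t <= t - 1.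
Proof.
  intros Ht. destruct (Req_dec (ln t) 0) as [H|H]; [rewrite H; 
  assert (t = 1) by (apply ln_inv; [lra|lra|rewrite ln_1; auto]); lra|].
  pose proof (exp_ineq1 (ln t) H). rewrite exp_ln in H0; lra.
Qed.

Lemma ln3_ge1 : 1 <= ln 3.
Proof.
  rewrite <- (ln_exp 1) at 1. apply ln_le'; [apply exp_pos|apply exp_le_3].
Qed.

Lemma xlny x y : 3 <= x <= y -> x * ln y <= y * ln x.
Proof.
  intros [H1 H2].
  assert (Hlx : 1 <= ln x) by (eapply Rle_trans; [apply ln3_ge1|apply ln_le'; lra]).
  assert (Hq : ln y - ln x <= y / x - 1).
  { replace (ln y - ln x) with (ln (y / x)).
    - apply ln_le_sub1. apply Rdiv_lt_0_compat; lra.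
    - unfold Rdiv. rewrite ln_mult, ln_Rinv; try lra. apply Rinv_0_lt_compat; lra. }
  assert (x * (ln y - ln x) <= y - x).
  { apply Rmult_le_compat_l with (r := x) in Hq; [|lra].
    replace (x * (y / x - 1)) with (y - x) in Hq by (field; lra). lra. }
  nra.
Qed.

Lemma ln2_pos : 0 < ln 2.
Proof. pose proof ln_lt_2; lra. Qed.

Lemma key_M K M : 4 <= K -> (M = 2 \/ 3 <= M <= K) -> 3 * M <= 3 * K / ln K * ln M.
Proof.
  intros HK HM.
  assert (HlK : 0 < ln K) by (pose proof (ln_increasing 1 K ltac:(lra) ltac:(lra)) as HH; rewrite ln_1 in HH; exact HH).
  assert (H : M * ln K <= K * ln M).
  { destruct HM as [->|HM]; [|apply xlny; lra].
    pose proof (xlny 4 K ltac:(lra)).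
    replace 4 with (2 * 2) in H at 2 by lra. rewrite ln_mult in H by lra. lra. }
  unfold Rdiv. apply (Rmult_le_reg_r (ln K)); [lra|].
  replace (3 * K * / ln K * ln M * ln K) with (3 * (K * ln M)) by (field; lra). lra.
Qed.

Definition bad (th K : R) : Prop :=
  forall (q : nat) (p : Z), (1 <= q)%nat -> / K <= INR q * Rabs (INR q * th - IZR p).

Lemma main_rec th K : 4 <= K -> bad th K ->
  forall N, (1 <= N)%nat -> forall n0 lam, 0 <= lam <= 1 ->
  Rabs (INR (cnt (Pf th 0 lam) n0 N) - INR N * lam) <= 3 * K / ln K * ln (INR N) + 1.
Proof.
  intros HK Hbad.
  assert (HlK : 0 < ln K) by (pose proof (ln_increasing 1 K ltac:(lra) ltac:(lra)) as HH; rewrite ln_1 in HH; exact HH).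
  assert (HB : 0 <= 3 * K / ln K) by (apply Rle_trans with 0; [lra|]; left; apply Rdiv_lt_0_compat; lra).
  set (B := 3 * K / ln K) in *.
  intros N. induction N as [N IH] using lt_wf_ind. intros HN n0 lam Hl.
  destruct (Nat.eq_dec N 1) as [->|HN1].
  { simpl INR. rewrite ln_1, Rmult_0_r, Rplus_0_l.
    pose proof (cnt_le (Pf th 0 lam) n0 1). apply le_INR in H. simpl in H.
    pose proof (pos_INR (cnt (Pf th 0 lam) n0 1)).
    apply Rabs_le. destruct (Pf th 0 lam (n0 + 1)); simpl; lra. }
  assert (HN0 : 0 < INR N) by (apply lt_0_INR; lia).
  set (Pq := fun q => (1 <= q)%nat /\ exists p, Rabs (INR q * th - IZR p) < / INR N).
  destruct (dirichlet th N HN) as [q0 [p0 [Hq0 Hp0]]].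
  destruct (min_ex Pq q0) as [q [[Hq [p Hp]] Hmin]].
  { split; [lia|eauto]. }
  assert (HqN : (q <= N)%nat).
  { destruct (le_lt_dec q q0); [lia|]. exfalso. apply (Hmin q0); [lia|split; [lia|eauto]]. }
  assert (Hq0' : 0 < INR q) by (apply lt_0_INR; lia).
  assert (Heps : / INR N <= / INR q) by (apply Rinv_le_contravar; [lra|apply le_INR; lia]).
  assert (Hm2 : forall j k, (1 <= j < q)%nat -> / INR N <= Rabs (INR j * th - IZR k)).
  { intros j k Hj. apply Rnot_lt_le. intros Hc. apply (Hmin j); [lia|]. split; [lia|eauto]. }
  set (m := (N / q)%nat). set (r := (N mod q)%nat).
  assert (HNmr : N = (m * q + r)%nat) by (unfold m, r; pose proof (Nat.div_mod N q); lia).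
  assert (Hr : (r < q)%nat) by (unfold r; apply Nat.mod_upper_bound; lia).
  assert (Hm1 : (1 <= m)%nat) by (unfold m; apply Nat.div_le_lower_bound; lia).
  assert (HNK : INR N < K * INR q).
  { specialize (Hbad q p Hq).
    assert (INR q * Rabs (INR q * th - IZR p) < INR q / INR N).
    { unfold Rdiv. apply Rmult_lt_compat_l; lra. }
    assert (/ K < INR q / INR N) by lra.
    apply Rinv_lt_contravar in H0.
    2:{ apply Rmult_lt_0_compat; [apply Rinv_0_lt_compat; lra|]. apply Rdiv_lt_0_compat; lra. }
    rewrite Rinv_inv in H0. unfold Rdiv in H0. rewrite Rinv_mult, Rinv_inv in H0.
    apply (Rmult_lt_reg_r (/ INR q)); [apply Rinv_0_lt_compat; lra|].
    rewrite Rmult_assoc, Rinv_r; lra. }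
  assert (HmK : INR m < K).
  { assert (INR (m * q) <= INR N) by (apply le_INR; lia).
    rewrite mult_INR in H. nra. }
  set (M := Nat.max m 2).
  assert (HrM : (r * M <= N)%nat).
  { unfold M. destruct (Nat.max_spec m 2) as [[H1 H2]|[H1 H2]]; rewrite H2.
    - assert (m = 1)%nat by lia. subst m. lia.
    - nia. }
  assert (HMN : (M <= N)%nat) by (unfold M; nia).
  assert (HkeyM : 3 * INR M <= B * ln (INR M)).
  { apply key_M; [lra|]. destruct (Nat.eq_dec M 2) as [E|E].
    - left. rewrite E. simpl; lra.
    - right. split.
      + replace 3 with (INR 3) by (simpl; lra). apply le_INR. unfold M in *. lia.
      + apply Rle_trans with (INR m); [|lra]. right. f_equal. unfold M in *. lia. }
  assert (HmM : INR m <= INR M) by (apply le_INR; unfold M; lia).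
  assert (HM0 : 0 < INR M) by (apply lt_0_INR; unfold M; lia).
  assert (HlMN : ln (INR M) <= ln (INR N)) by (apply ln_le'; [lra|apply le_INR; auto]).
  assert (Hc : cnt (Pf th 0 lam) n0 N = (cnt (Pf th 0 lam) n0 (m * q) + cnt (Pf th 0 lam) (n0 + m * q) r)%nat)
    by (rewrite HNmr at 1; apply cnt_add).
  assert (HNr : INR N = INR (m * q) + INR r) by (rewrite HNmr at 1; apply plus_INR).
  rewrite Hc, plus_INR.
  pose proof (multi_block th q p lam (/ INR N) Hq Hl Hp Heps Hm2 m n0) as Hblk.
  apply Rabs_le_inv' in Hblk.
  assert (HBM : B * ln (INR M) <= B * ln (INR N)) by (apply Rmult_le_compat_l; auto).
  destruct (Nat.eq_dec r 0) as [Hr0|Hr0].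
  - rewrite Hr0 in *. simpl cnt. simpl INR in *.
    apply Rabs_le. split; nra.
  - assert (Hrlt : (r < N)%nat) by lia.
    pose proof (IH r Hrlt ltac:(lia) (n0 + m * q)%nat lam Hl) as Hrec.
    apply Rabs_le_inv' in Hrec.
    assert (Hr0' : 0 < INR r) by (apply lt_0_INR; lia).
    assert (Hln : ln (INR r) + ln (INR M) <= ln (INR N)).
    { rewrite <- ln_mult by lra. apply ln_le'; [nra|]. rewrite <- mult_INR. apply le_INR; auto. }
    assert (B * ln (INR r) + B * ln (INR M) <= B * ln (INR N)).
    { rewrite <- Rmult_plus_distr_l. apply Rmult_le_compat_l; auto. }
    apply Rabs_le. split; nra.
Qed.

Lemma disc_bound th K N : 4 <= K -> bad th K -> (2 <= N)%nat ->
  INR N * discrepancy th N <= 5 * (K / ln K) * ln (INR N).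
Proof.
  intros HK Hbad HN.
  assert (HlK : 0 < ln K) by (pose proof (ln_increasing 1 K ltac:(lra) ltac:(lra)) as HH; rewrite ln_1 in HH; exact HH).
  assert (HN0 : 2 <= INR N) by (replace 2 with (INR 2) by (simpl; lra); apply le_INR; auto).
  assert (HlN : / 2 < ln (INR N)).
  { apply Rlt_le_trans with (ln 2); [apply ln_lt_2|apply ln_le'; lra]. }
  assert (HKl : 1 <= K / ln K).
  { pose proof (ln_le_sub1 K ltac:(lra)). apply (Rmult_le_reg_r (ln K)); [lra|].
    unfold Rdiv. rewrite Rmult_assoc, Rinv_l; lra. }
  set (U := 3 * K / ln K * ln (INR N) + 1).
  assert (HD : discrepancy th N <= U / INR N).
  { unfold discrepancy. destruct (completeness _ _ _) as [D [Hub Hlub]]. simpl.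
    apply Hlub. intros d [lam [Hl ->]].
    pose proof (main_rec th K HK Hbad N ltac:(lia) 0 lam Hl) as H.
    rewrite <- count_in_cnt in H.
    replace (INR (count_in th lam N) / INR N - lam)
      with ((INR (count_in th lam N) - INR N * lam) / INR N) by (field; lra).
    unfold Rdiv. rewrite Rabs_mult, (Rabs_right (/ INR N)).
    2:{ left; apply Rinv_0_lt_compat; lra. }
    apply Rmult_le_compat_r; [left; apply Rinv_0_lt_compat; lra|]. exact H. }
  apply Rmult_le_compat_l with (r := INR N) in HD; [|lra].
  replace (INR N * (U / INR N)) with U in HD by (field; lra).
  unfold U in HD.
  assert (3 * K / ln K = 3 * (K / ln K)) by (unfold Rdiv; ring).
  nra.
Qed.

Lemma bad_mono th K K' : 0 < K -> K <= K' -> bad th K -> bad th K'.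
Proof.
  intros H0 H1 Hb q p Hq. eapply Rle_trans; [|apply Hb; auto].
  apply Rinv_le_contravar; lra.
Qed.

Lemma KlnK_mono K K' : 4 <= K -> K <= K' -> K / ln K <= K' / ln K'.
Proof.
  intros H1 H2.
  assert (HlK : 0 < ln K) by (pose proof (ln_increasing 1 K ltac:(lra) ltac:(lra)) as HH; rewrite ln_1 in HH; exact HH).
  assert (HlK' : 0 < ln K') by (pose proof (ln_increasing 1 K' ltac:(lra) ltac:(lra)) as HH; rewrite ln_1 in HH; exact HH).
  pose proof (xlny K K' ltac:(lra)).
  unfold Rdiv. apply (Rmult_le_reg_r (ln K * ln K')); [nra|].
  replace (K * / ln K * (ln K * ln K')) with (K * ln K') by (field; lra).
  replace (K' * / ln K' * (ln K * ln K')) with (K' * ln K) by (field; lra). lra.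
Qed.

Lemma IZR_abs_ge1 z : z <> 0%Z -> 1 <= Rabs (IZR z).
Proof.
  intros H. rewrite <- abs_IZR. apply IZR_le. lia.
Qed.

Lemma dio (a b : Z) (al : R) l1 m1 l2 m2 :
  (0 < a)%Z -> (a < b)%Z -> 0 < al -> al * al = IZR b / IZR a ->
  (forall x y : Z, (a * x * x = b * y * y)%Z -> x = 0%Z /\ y = 0%Z) ->
  (l1 * m2 - m1 * l2)%Z <> 0%Z ->
  (Z.abs l2 <= 2 * Z.abs (l1 * m2 - m1 * l2))%Z ->
  (Z.abs m2 <= 2 * Z.abs (l1 * m2 - m1 * l2))%Z ->
  bad (- ((IZR l1 - al * IZR m1) / (IZR l2 - al * IZR m2)))
      (8 * IZR b * IZR (Z.abs (l1 * m2 - m1 * l2))).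
Proof.
  intros Ha Hab Hal Hal2 Hirr HD Hl2 Hm2 q p Hq.
  set (Dz := (l1 * m2 - m1 * l2)%Z) in *.
  assert (HA : 1 <= IZR a) by (apply IZR_le; lia).
  assert (HBb : IZR a < IZR b) by (apply IZR_lt; lia).
  assert (Hal2' : IZR a * (al * al) = IZR b) by (rewrite Hal2; field; lra).
  assert (Hal1' : 1 < al * al).
  { apply (Rmult_lt_reg_l (IZR a)); lra. }
  assert (Hal1 : 1 < al) by nra.
  assert (Haal : IZR a * al <= IZR b) by nra.
  assert (Hd : 1 <= IZR (Z.abs Dz)) by (apply IZR_le; lia).
  assert (HdD : IZR (Z.abs Dz) = Rabs (IZR Dz)) by apply abs_IZR.
  set (d := IZR (Z.abs Dz)) in *.
  assert (HQ : 1 <= INR q) by (replace 1 with (INR 1) by reflexivity; apply le_INR; auto).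
  set (Q := INR q) in *. set (P := IZR p).
  set (Le1 := IZR l1 - al * IZR m1). set (Le2 := IZR l2 - al * IZR m2).
  set (Lp2 := IZR l2 + al * IZR m2).
  assert (HLe2 : Le2 <> 0).
  { intros E. assert (IZR l2 = al * IZR m2) by (unfold Le2 in E; lra).
    assert (IZR (a * l2 * l2) = IZR (b * m2 * m2)).
    { rewrite !mult_IZR. rewrite H. rewrite <- Hal2'. ring. }
    apply eq_IZR in H0. destruct (Hirr _ _ H0) as [-> ->]. apply HD. unfold Dz. ring. }
  set (th := - (Le1 / Le2)).
  set (s := Q * th - P).
  apply Rnot_lt_le. intros Hc.
  set (x := (Z.of_nat q * l1 + p * l2)%Z). set (y := (Z.of_nat q * m1 + p * m2)%Z).
  assert (Hxy : ~ (x = 0%Z /\ y = 0%Z)).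
  { intros [Hx Hy]. apply HD. unfold x, y in *.
    assert (Z.of_nat q * Dz = 0)%Z.
    { unfold Dz. replace (Z.of_nat q * (l1 * m2 - m1 * l2))%Z
        with ((Z.of_nat q * l1 + p * l2) * m2 - (Z.of_nat q * m1 + p * m2) * l2)%Z by ring.
      rewrite Hx, Hy. ring. }
    apply Z.mul_eq_0 in H. destruct H; [lia|auto]. }
  assert (HNz : (a * x * x - b * y * y)%Z <> 0%Z).
  { intros E. apply Hxy. apply Hirr. lia. }
  pose proof (IZR_abs_ge1 _ HNz) as HN1.
  assert (HX : IZR x = Q * IZR l1 + P * IZR l2).
  { unfold x. rewrite plus_IZR, !mult_IZR, <- INR_IZR_INZ. reflexivity. }
  assert (HY : IZR y = Q * IZR m1 + P * IZR m2).
  { unfold y. rewrite plus_IZR, !mult_IZR, <- INR_IZR_INZ. reflexivity. }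
  set (Lv := IZR x - al * IZR y). set (Lpv := IZR x + al * IZR y).
  assert (HLv : Lv = - s * Le2).
  { unfold Lv, s, th. rewrite HX, HY. unfold Le1, Le2, P. field. exact HLe2. }
  assert (Hid : Lpv * Le2 = -2 * al * IZR Dz * Q + Lp2 * Lv).
  { unfold Lpv, Lv, Lp2, Le2, Dz. rewrite HX, HY, minus_IZR, !mult_IZR. ring. }
  assert (Hnorm : Lv * Lpv * IZR a = IZR (a * x * x - b * y * y)).
  { unfold Lv, Lpv. rewrite minus_IZR, !mult_IZR.
    replace (IZR b) with (IZR a * (al * al)) by exact Hal2'. ring. }
  assert (Hm : Rabs Lv * Rabs Lpv * IZR a >= 1).
  { rewrite <- (Rabs_right (IZR a)) by lra. rewrite <- !Rabs_mult, Hnorm. lra. }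
  set (u := Rabs s).
  assert (Hu0 : 0 <= u) by apply Rabs_pos.
  assert (HLvu : Rabs Lv = u * Rabs Le2) by (rewrite HLv, Rabs_mult, Rabs_Ropp; reflexivity).
  assert (HLpv : Rabs Lpv * Rabs Le2 <= 2 * al * d * Q + Rabs Lp2 * (u * Rabs Le2)).
  { rewrite <- Rabs_mult, Hid, <- HLvu.
    eapply Rle_trans; [apply Rabs_triang|].
    replace (-2 * al * IZR Dz * Q) with (-(2 * al * Q) * IZR Dz) by ring.
    rewrite Rabs_mult, Rabs_mult, Rabs_Ropp, <- HdD.
    rewrite (Rabs_right (2 * al * Q)) by nra.
    assert (0 <= Rabs Lp2) by apply Rabs_pos. nra. }
  assert (HE2 : 0 < Rabs Le2) by (apply Rabs_pos_lt; auto).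
  assert (Hmain : 1 <= IZR a * u * (2 * al * d * Q + Rabs Lp2 * Rabs Le2 * u)).
  { assert (Rabs Lv * Rabs Lpv <= u * (2 * al * d * Q + Rabs Lp2 * (u * Rabs Le2))).
    { rewrite HLvu. replace (u * Rabs Le2 * Rabs Lpv) with (u * (Rabs Lpv * Rabs Le2)) by ring.
      apply Rmult_le_compat_l; auto. }
    assert (1 <= IZR a * (u * (2 * al * d * Q + Rabs Lp2 * (u * Rabs Le2)))).
    { eapply Rle_trans; [apply Rge_le; exact Hm|]. rewrite Rmult_comm. apply Rmult_le_compat_l; lra. }
    nra. }
  assert (HLL : Rabs Lp2 * Rabs Le2 <= 8 * (al * al) * (d * d)).
  { rewrite <- Rabs_mult.
    replace (Lp2 * Le2) with (IZR l2 * IZR l2 - (al * al) * (IZR m2 * IZR m2)) by (unfold Lp2, Le2; ring).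
    assert (Hl2' : IZR l2 * IZR l2 <= 4 * (d * d)).
    { unfold d. rewrite <- !mult_IZR. apply IZR_le. nia. }
    assert (Hm2' : IZR m2 * IZR m2 <= 4 * (d * d)).
    { unfold d. rewrite <- !mult_IZR. apply IZR_le. nia. }
    assert (0 <= IZR l2 * IZR l2) by nra. assert (0 <= IZR m2 * IZR m2) by nra.
    apply Rabs_le. split; nra. }
  set (K := 8 * IZR b * d) in *.
  assert (HK : 0 < K) by (unfold K; nra).
  assert (HQu : Q * u * K < 1).
  { change (Rabs s) with u in Hc. apply (Rmult_lt_compat_r K) in Hc; auto. rewrite Rinv_l in Hc; lra. }
  assert (HuK : u * K < 1) by nra.
  assert (T1 : IZR a * u * (2 * al * d * Q) * 4 < 1).
  { unfold K in HQu. nra. }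
  assert (T2 : IZR a * u * (Rabs Lp2 * Rabs Le2 * u) * 8 <= 1).
  { assert (IZR a * u * (Rabs Lp2 * Rabs Le2 * u) <= IZR a * u * u * (8 * (al * al) * (d * d))).
    { replace (IZR a * u * (Rabs Lp2 * Rabs Le2 * u)) with (IZR a * u * u * (Rabs Lp2 * Rabs Le2)) by ring.
      apply Rmult_le_compat_l; [nra|auto]. }
    assert (IZR a * u * u * (8 * (al * al) * (d * d)) = 8 * IZR b * d * d * u * u)
      by (rewrite <- Hal2'; ring).
    assert (8 * IZR b * d * d * u * u * 8 <= 1).
    { assert (0 <= u * K) by (apply Rmult_le_pos; lra).
      assert (Hsq : (u * K) * (u * K) <= 1 * 1) by (apply Rmult_le_compat; lra).
      assert (1 <= IZR b) by lra.
      assert (Hp : 0 <= (d * u) * (d * u)) by nra.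
      assert (Hp2 : 0 <= IZR b * ((d * u) * (d * u))) by nra.
      assert (Hp3 : 0 <= (IZR b - 1) * (IZR b * ((d * u) * (d * u)))) by (apply Rmult_le_pos; lra).
      replace ((u * K) * (u * K)) with (64 * (IZR b * (IZR b * ((d * u) * (d * u))))) in Hsq
        by (unfold K; ring).
      replace (8 * IZR b * d * d * u * u * 8) with (64 * (IZR b * ((d * u) * (d * u)))) by ring.
      lra. }
    nra. }
  nra.
Qed.

Lemma final_step X N : 2 <= X -> (2 <= N)%nat -> forall Dv,
  Dv <= 5 * (8 * X / ln (8 * X)) * ln (INR N) -> Dv <= 40 * (X / ln X) * ln (INR N).
Proof.
  intros HX HN Dv H.
  assert (HlX : 0 < ln X) by (pose proof (ln_increasing 1 X ltac:(lra) ltac:(lra)) as HH; rewrite ln_1 in HH; exact HH).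
  assert (Hl8 : 0 < ln 8) by (pose proof (ln_increasing 1 8 ltac:(lra) ltac:(lra)) as HH; rewrite ln_1 in HH; exact HH).
  assert (HlN : 0 < ln (INR N)).
  { assert (2 <= INR N) by (replace 2 with (INR 2) by (simpl; lra); apply le_INR; auto).
    pose proof (ln_increasing 1 (INR N) ltac:(lra) ltac:(lra)) as HH; rewrite ln_1 in HH; exact HH. }
  assert (E : 8 * X / ln (8 * X) <= 8 * (X / ln X)).
  { rewrite ln_mult by lra. unfold Rdiv. rewrite <- Rmult_assoc. apply Rmult_le_compat_l; [lra|].
    apply Rinv_le_contravar; lra. }
  eapply Rle_trans; [exact H|].
  apply Rmult_le_compat_r; lra.
Qed.

Theorem mainTheorem15 :
  exists C : R, forall (a b : Z) (lam1 mu1 lam2 mu2 nu1 nu2 : Z) (N : nat),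
    (0 < a)%Z -> (a < b)%Z -> Z.gcd a b = 1%Z ->
    (~ exists p q : Z, q <> 0%Z /\ sqrt (IZR b / IZR a) = IZR p / IZR q) ->
    zdet (lam1, mu1) (lam2, mu2) <> 0%Z ->
    is_nu1 (lam1, mu1) (lam2, mu2) nu1 ->
    is_nu2 (lam1, mu1) (lam2, mu2) nu2 ->
    (supnorm (lam1, mu1) <= 2 * nu2)%Z ->
    (supnorm (lam2, mu2) <= 2 * nu1)%Z ->
    (1 < N)%nat ->
    let alpha := sqrt (IZR b / IZR a) in
    let theta := - ((IZR lam1 - alpha * IZR mu1) / (IZR lam2 - alpha * IZR mu2)) in
    let dG := IZR (lattice_det (lam1, mu1) (lam2, mu2)) in
    INR N * discrepancy alpha N <= C * (IZR b / ln (IZR b)) * ln (INR N) /\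
    INR N * discrepancy theta N <=
      C * (IZR b * dG / ln (IZR b * dG)) * ln (INR N).
Proof.
  exists 40. intros a b lam1 mu1 lam2 mu2 nu1 nu2 N Ha Hab _ Hrat HD Hnu1 _ _ Hsn HN alpha theta dG.
  assert (HA : 0 < IZR a) by (apply IZR_lt; lia).
  assert (HB : 2 <= IZR b) by (apply IZR_le; lia).
  assert (Hba : 0 < IZR b / IZR a) by (apply Rdiv_lt_0_compat; lra).
  assert (Hal : 0 < alpha) by (apply sqrt_lt_R0; lra).
  assert (Hal2 : alpha * alpha = IZR b / IZR a) by (apply sqrt_sqrt; lra).
  assert (Hirr : forall x y : Z, (a * x * x = b * y * y)%Z -> x = 0%Z /\ y = 0%Z).
  { intros x y Hxy. destruct (Z.eq_dec y 0) as [Hy|Hy].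
    - subst y. split; [|reflexivity]. rewrite Z.mul_0_r in Hxy. nia.
    - exfalso. apply Hrat. exists (Z.abs x), (Z.abs y). split; [lia|].
      assert (Hy' : 0 < IZR (Z.abs y)) by (apply IZR_lt; lia).
      assert (Hx' : 0 <= IZR (Z.abs x)) by (apply IZR_le; lia).
      set (r := IZR (Z.abs x) / IZR (Z.abs y)).
      assert (Hr0 : 0 <= r) by (apply Rmult_le_pos; [lra|left; apply Rinv_0_lt_compat; lra]).
      assert (Hrr : r * r = IZR b / IZR a).
      { apply (f_equal IZR) in Hxy. rewrite !mult_IZR in Hxy.
        unfold r. rewrite !abs_IZR.
        assert (Rabs (IZR x) * Rabs (IZR x) = IZR x * IZR x) by (rewrite <- Rabs_mult; apply Rabs_right; nra).
        assert (Rabs (IZR y) * Rabs (IZR y) = IZR y * IZR y) by (rewrite <- Rabs_mult; apply Rabs_right; nra).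
        rewrite !abs_IZR in Hy'.
        assert (Hyn : IZR y <> 0) by (apply not_0_IZR; exact Hy).
        replace (Rabs (IZR x) / Rabs (IZR y) * (Rabs (IZR x) / Rabs (IZR y)))
          with ((Rabs (IZR x) * Rabs (IZR x)) / (Rabs (IZR y) * Rabs (IZR y))) by (field; lra).
        rewrite H, H0.
        apply (Rmult_eq_reg_r (IZR a * (IZR y * IZR y))).
        - replace (IZR x * IZR x / (IZR y * IZR y) * (IZR a * (IZR y * IZR y)))
            with (IZR a * IZR x * IZR x) by (field; auto).
          replace (IZR b / IZR a * (IZR a * (IZR y * IZR y))) with (IZR b * IZR y * IZR y)
            by (field; lra).
          exact Hxy.
        - apply Rmult_integral_contrapositive; split; [lra|]. apply Rmult_integral_contrapositive; auto. }
      unfold alpha. rewrite <- Hrr. apply sqrt_square. exact Hr0. }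
  split.
  - pose proof (dio a b alpha 0 1 1 0 Ha Hab Hal Hal2 Hirr ltac:(discriminate)
                  ltac:(simpl; lia) ltac:(simpl; lia)) as Hbad.
    replace (- ((IZR 0 - alpha * IZR 1) / (IZR 1 - alpha * IZR 0))) with alpha in Hbad
      by (simpl; field).
    replace (IZR (Z.abs (0 * 0 - 1 * 1))) with 1 in Hbad by reflexivity.
    rewrite Rmult_1_r in Hbad.
    pose proof (disc_bound alpha (8 * IZR b) N ltac:(lra) Hbad ltac:(lia)).
    apply (final_step (IZR b) N HB ltac:(lia)). exact H.
  - set (Dz := (lam1 * mu2 - mu1 * lam2)%Z).
    assert (HDz : zdet (lam1, mu1) (lam2, mu2) = Dz) by reflexivity.
    assert (HdG : dG = IZR (Z.abs Dz)) by reflexivity.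
    rewrite HDz in HD.
    destruct Hnu1 as [_ Hnu1].
    assert (Hlat : in_lattice (lam1, mu1) (lam2, mu2) (Dz, 0%Z)).
    { exists mu2, (- mu1)%Z. simpl. unfold Dz. split; ring. }
    assert (Hn0 : (Dz, 0%Z) <> (0%Z, 0%Z)) by (intros E; inversion E; auto).
    specialize (Hnu1 _ Hlat Hn0). unfold supnorm in Hnu1, Hsn. cbn [fst snd] in Hnu1, Hsn.
    assert (Hl2 : (Z.abs lam2 <= 2 * Z.abs Dz)%Z) .
    { lia. }
    assert (Hm2 : (Z.abs mu2 <= 2 * Z.abs Dz)%Z) by lia.
    pose proof (dio a b alpha lam1 mu1 lam2 mu2 Ha Hab Hal Hal2 Hirr HD Hl2 Hm2) as Hbad.
    fold Dz in Hbad. rewrite <- HdG in Hbad.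
    assert (Hd1 : 1 <= dG) by (rewrite HdG; apply IZR_le; lia).
    replace (8 * IZR b * dG) with (8 * (IZR b * dG)) in Hbad by ring.
    pose proof (disc_bound theta (8 * (IZR b * dG)) N ltac:(nra) Hbad ltac:(lia)).
    apply (final_step (IZR b * dG) N ltac:(nra) ltac:(lia)). exact H.
Qed.
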